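(* Let $N\ge1$, $c_1,c_2\in\mathbb{R}$ with $2Nc_1\in\mathbb{Z}$, and let integers $\tilde k,\tilde l$ be given; set $\tilde m=\tilde k-2Nc_1\tilde l$. For $\bar m=0,\dots,N-1$ define $$\mathcal{E}(\bar m,\tilde m)=e^{j\frac{2\pi}{N}\left(\bar m\tilde l+Nc_2\left((\bar m+\tilde m)_N^2-\bar m^2\right)\right)},\quad \mathbf{P}=\operatorname{diag}\big(\mathcal{E}^*(\bar m,\tilde m),\ \bar m=0,\dots,N-1\big),$$ and the MD-CDDS-AFDM precoder $\mathbf{C}=\boldsymbol{\Pi}_N^{\tilde m}\mathbf{P}$. For $\mathbf{x}\in\mathbb{C}^N$ let $\mathbf{x}'=\mathbf{C}\mathbf{x}$. For integer paths $(k_i,l_i)$ and gains $h_i$, $i=1,\dots,P$, define the (noise-free) AFDM output $$y[m]=\sum_{i=1}^P h_i e^{j\frac{2\pi}{N}\left(Nc_1l_i^2-m'_il_i+Nc_2(m_i'^2-m^2)\right)}x'[m'_i],\quad m'_i=(m+\operatorname{ind}_i)_N,\ \operatorname{ind}_i=(2Nc_1l_i-k_i)_N.$$ Then for every $m=0,\dots,N-1$, $$y[m]=\sum_{i=1}^P \bar h_i\, e^{j\frac{2\pi}{N}\left(Nc_1\bar l_i^2-\bar m_i\bar l_i+Nc_2(\bar m_i^2-m^2)\right)}x[\bar m_i],\qquad \bar m_i=(m+\overline{\operatorname{ind}}_i)_N,$$ where $\bar k_i=k_i+\tilde k$, $\bar l_i=l_i+\tilde l$, $\overline{\operatorname{ind}}_i=(2Nc_1\bar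 l_i-\bar k_i)_N$, and $\bar h_i=h_i\,e^{-j\frac{2\pi}{N}\left(Nc_1(2l_i\tilde l+\tilde l^2)+\tilde m l_i\right)}$. In particular, MD-CDDS in AFDM is equivalent to shifting every path by $(\tilde k,\tilde l)$ in the AFDM input-output relation, with a unit-modulus gain change that does not depend on the symbol index.
   Context: $\boldsymbol{\Pi}_N$ is the $N\times N$ forward cyclic-shift matrix, $(\boldsymbol{\Pi}_N\mathbf{v})[n]=v[(n-1)_N]$ (for negative exponents, its inverse powers); $(\cdot)_N$ denotes reduction modulo $N$ into $\{0,\dots,N-1\}$; $^*$ denotes complex conjugation. The displayed formula for $y[m]$ is the discrete affine Fourier transform (DAFT) domain input-output relation of AFDM with chirp parameters $c_1,c_2$ over a doubly selective channel with integer normalized delays $l_i$ and Doppler shifts $k_i$. *)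

(* Defs.v *)
From HB Require Import structures.
From mathcomp Require Import all_boot all_order all_algebra.
From mathcomp Require Import reals trigo complex.
Unset Printing Implicit Defensive.
Import Order.TTheory GRing.Theory Num.Theory.
Local Open Scope ring_scope.

Section AFDM.
Variable R : realType.
Local Notation C := R[i].

Definition cexpj (t : R) : C := Complex (cos t) (sin t).

Definition modN (n : nat) (z : int) : 'I_n.+1 := inord `|(z %% n.+1%:Z)%Z|%N.

(* forward cyclic shift: (Pi v)[i] = v[(i-1)_N], i.e. Pi i j = [i == j+1 mod N] *)
Definition cshift (n : nat) : 'M[C]_n.+1 :=
  \matrix_(i, j) (i == modN n (j%:Z + 1))%:R.

(* AFDM noise-free DAFT-domain output, N = n.+1, paths i < P with Doppler k i,
   delay l i, gain h i. The integer a stands for 2 N c1 (assumed integer). *)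
Definition afdm_out (n : nat) (c1 c2 : R) (a : int) (P : nat)
  (h : 'I_P -> C) (k l : 'I_P -> int) (xv : 'cV[C]_n.+1) (m : 'I_n.+1) : C :=
  let N := n.+1%:R : R in
  \sum_(i < P)
    let ind := modN n (a * l i - k i) in
    let m' := modN n (m%:Z + ind%:Z) in
    h i * cexpj (2 * pi / N *
        (N * c1 * (l i)%:~R ^+ 2 - (m' : nat)%:R * (l i)%:~R
         + N * c2 * ((m' : nat)%:R ^+ 2 - (m : nat)%:R ^+ 2)))
        * xv m' 0.

Definition Ephase (n : nat) (c2 : R) (lt mt : int) (mb : 'I_n.+1) : C :=
  let N := n.+1%:R : R in
  cexpj (2 * pi / N * ((mb : nat)%:R * lt%:~R
         + N * c2 * (((modN n (mb%:Z + mt)) : nat)%:R ^+ 2 - (mb : nat)%:R ^+ 2))).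

Definition precoder (n : nat) (c2 : R) (lt mt : int) : 'M[C]_n.+1 :=
  cshift n ^ mt *m diag_mx (\row_mb conjc (Ephase n c2 lt mt mb)).

End AFDM.
Arguments cexpj {R}.
Arguments afdm_out {R}.
Arguments precoder {R}.

(* Main.v *)
Require Import Defs.
From HB Require Import structures.
From mathcomp Require Import all_boot all_order all_algebra.
From mathcomp Require Import reals trigo complex.
From mathcomp Require Import ring lra.
Import Order.TTheory GRing.Theory Num.Theory.
Local Open Scope ring_scope.

Section L.
Variable R : realType.
Local Notation C := R[i].

Lemma cexpjD (s t : R) : cexpj (s + t) = cexpj s * cexpj t :> C.
Proof. by rewrite /cexpj cosD sinD /=; congr Complex; ring. Qed.

Lemma cexpj_conj (t : R) : conjc (cexpj t) = cexpj (- t) :> C.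
Proof. by rewrite /cexpj cosN sinN. Qed.

Lemma cexpj_2pin (k : nat) : cexpj (2 * pi * k%:R) = 1 :> C.
Proof.
elim: k => [|k IH]; first by rewrite mulr0 /cexpj cos0 sin0.
have -> : 2 * pi * k.+1%:R = 2 * pi * k%:R + pi *+ 2 :> R.
  by rewrite -natr1 mulr2n; ring.
by rewrite cexpjD IH mul1r /cexpj cos2pi sin2pi.
Qed.

Lemma cexpj_2piz (z : int) : cexpj (2 * pi * z%:~R) = 1 :> C.
Proof.
case: z => k; first by rewrite -pmulrn cexpj_2pin.
rewrite NegzE intrN mulrN -cexpj_conj -pmulrn cexpj_2pin.
by rewrite /conjc /= oppr0.
Qed.

Variable n : nat.
Local Notation N := n.+1.

Lemma modN_val (z : int) : ((modN n z : nat)%:Z) = (z %% N)%Z.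
Proof.
rewrite /modN inordK; first by rewrite gez0_abs // modz_ge0.
by rewrite -ltz_nat gez0_abs ?modz_ge0 // ltz_pmod.
Qed.

Lemma modN_eq (z1 z2 : int) : (z1 = z2 %[mod N])%Z -> modN n z1 = modN n z2.
Proof. by rewrite /modN => ->. Qed.

Lemma modN_ord (j : 'I_N) : modN n j = j.
Proof.
apply/val_inj/eqP; rewrite /= -eqz_nat modN_val modz_small //.
by rewrite ltz_nat ltn_ord.
Qed.

Lemma ord_modNP (j : 'I_N) (z : int) : (j == modN n z) = (j%:Z == z %[mod N])%Z.
Proof.
rewrite -(inj_eq val_inj) /= -eqz_nat modN_val.
by rewrite -{1}(@modz_small j N) // ltz_nat ltn_ord.
Qed.

Definition Bm (z : int) : 'M[C]_N := \matrix_(i, j) (i == modN n (j%:Z + z))%:R.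

Lemma Bm_mul s t : Bm s *m Bm t = Bm (t + s).
Proof.
apply/matrixP => i j; rewrite !mxE (bigD1 (modN n (j%:Z + t))) //= big1 ?addr0.
  rewrite !mxE eqxx mulr1; congr (_%:R); congr (_ == _); apply: modN_eq.
  by rewrite modN_val modzDml addrA.
move=> l /negbTE nl; rewrite !mxE nl mulr0 //.
Qed.

Lemma Bm0 : Bm 0 = 1%:M.
Proof. by apply/matrixP => i j; rewrite !mxE addr0 modN_ord. Qed.

Lemma Bm_exprn (k : nat) : cshift R n ^+ k = Bm k.
Proof.
elim: k => [|k IH]; first by rewrite expr0 Bm0.
rewrite exprS IH -mulmxE.
have -> : cshift R n = Bm 1 by apply/matrixP => i j; rewrite !mxE.
by rewrite Bm_mul -PoszD addn1.
Qed.

Lemma Bm_expz (z : int) : cshift R n ^ z = Bm z.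
Proof.
case: z => k; first exact: Bm_exprn.
rewrite /exprz Bm_exprn NegzE.
have h : Bm (- k.+1%:Z) *m Bm k.+1 = 1%:M by rewrite Bm_mul subrr Bm0.
have [_ u] := mulmx1_unit h.
have h' : Bm (- k.+1%:Z) * Bm k.+1 = 1 := h.
by rewrite -[LHS]mul1r -h' -mulrA mulrV // mulr1.
Qed.

Lemma shift_swap (j l : 'I_N) (mt : int) :
  (j == modN n (l%:Z + mt)) = (l == modN n (j%:Z - mt)).
Proof.
rewrite !ord_modNP -(eqz_modDr mt (l%:Z)) subrK.
by rewrite /eq_op /= eq_sym.
Qed.

Lemma prec_entry (c2 : R) (lt mt : int) (x : 'cV[C]_N) (j : 'I_N) :
  (precoder n c2 lt mt *m x) j 0 =
  conjc (Ephase R n c2 lt mt (modN n (j%:Z - mt))) * x (modN n (j%:Z - mt)) 0.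
Proof.
rewrite /precoder Bm_expz mul_mx_diag mxE (bigD1 (modN n (j%:Z - mt))) //=.
rewrite big1 ?addr0.
  by rewrite !mxE shift_swap eqxx mul1r.
move=> l nl; rewrite !mxE shift_swap (negbTE nl) mul0r mul0r //.
Qed.

Lemma cexpj_shift (s t : R) (z : int) : s = t + 2 * pi * z%:~R -> cexpj s = cexpj t :> C.
Proof. by move=> ->; rewrite cexpjD cexpj_2piz mulr1. Qed.

Lemma aux4 (h e1 e2 e3 e4 xx : C) : e1 * e2 = e3 * e4 -> h * e1 * (e2 * xx) = h * e3 * e4 * xx.
Proof. by move=> E; rewrite mulrA -(mulrA h) E !mulrA. Qed.
End L.

Theorem mainTheorem4 (R : realType) (n : nat) (c1 c2 : R) (a : int)
  (ha : 2 * n.+1%:R * c1 = a%:~R) (kt lt : int)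
  (P : nat) (h : 'I_P -> R[i]) (k l : 'I_P -> int) (x : 'cV[R[i]]_n.+1)
  (m : 'I_n.+1) :
  let mt : int := kt - a * lt in
  let x' := precoder n c2 lt mt *m x in
  let kb := fun i : 'I_P => k i + kt in
  let lb := fun i : 'I_P => l i + lt in
  let hb := fun i => h i * cexpj (- (2 * pi / n.+1%:R *
              (n.+1%:R * c1 * (2 * (l i)%:~R * lt%:~R + lt%:~R ^+ 2)
               + mt%:~R * (l i)%:~R))) in
  afdm_out n c1 c2 a P h k l x' m = afdm_out n c1 c2 a P hb kb lb x m.
Proof.
move=> mt x' kb lb hb.
rewrite /afdm_out; apply: eq_bigr => i _ /=.
rewrite /x' /hb /kb /lb prec_entry.
set ind := modN n (a * l i - k i).
set m' := modN n (m%:Z + ind%:Z).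
set mb := modN n (m'%:Z - mt).
have Emb : modN n (m%:Z + (modN n (a * (l i + lt) - (k i + kt)))%:Z) = mb.
  rewrite /mb; apply: modN_eq; rewrite /m' /ind !modN_val modzDmr modzDml.
  rewrite addrAC modzDmr; congr (_ %% _)%Z; rewrite /mt; ring.
have Em' : modN n (mb%:Z + mt) = m'.
  transitivity (modN n m'); last exact: modN_ord.
  apply: modN_eq; rewrite /mb modN_val modzDml subrK //.
set q := ((m'%:Z - mt) %/ n.+1%:Z)%Z.
have hq : (mb : nat)%:Z = m'%:Z - mt - q * n.+1%:Z.
  rewrite /q /mb modN_val; set w := (m'%:Z - mt).
  have H := divz_eq w n.+1%:Z; rewrite {2}H; ring.
have hqR : (mb : nat)%:R = (m' : nat)%:R - mt%:~R - q%:~R * n.+1%:R :> R.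
  have := congr1 (fun z : int => z%:~R : R) hq; rewrite /= !intrB !intrM -!pmulrn; exact.
rewrite Emb /Ephase Em' cexpj_conj; apply: aux4; rewrite -!cexpjD.
apply: (@cexpj_shift _ _ _ (- (l i * q))).
have N0 : n.+1%:R != 0 :> R by rewrite pnatr_eq0.
rewrite hqR intrN intrM intrD; field; by rewrite addrC natr1 pnatr_eq0.
Qed.
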